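(* Let $f:[0,1]\to[0,1]$ be a surjective continuous function that does not admit a splitting sequence. If $f$ admits two distinct 2-cycles $\{s,t\}$ and $\{u,v\}$ with $s<t$ and $u<v$, then either $s<u<v<t$ or $u<s<t<v$.
   Context: A 2-cycle is a set $\{s,t\}$ with $s\ne t$, $f(s)=t$, $f(t)=s$. A sequence $(T_n)_{n\in\mathbb N}$ of closed intervals $T_n\subsetneq[0,1]$ (possibly degenerate) is tight if $f(T_{n+1})=T_n$ for every $n$ and $T_n$ is nondegenerate for all sufficiently large $n$. A tight sequence $(T_n)$, $T_n=[l_n,r_n]$, is a splitting sequence admitted by $f$ if there are an infinite set $N\subseteq\mathbb N$ and nondegenerate closed intervals $S_n\subseteq[0,1]$ ($n\in N$) with $S_n\cap T_n\subseteq\{l_n,r_n\}$ and $f(S_n)=f(T_n)$ for all $n\in N$. *)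

(* Defs.v *)
From Stdlib Require Import Reals.
Open Scope R_scope.

Definition inI (a b x : R) : Prop := a <= x <= b.

Definition self_map01 (f : R -> R) : Prop :=
  forall x, inI 0 1 x -> inI 0 1 (f x).
Definition continuous01 (f : R -> R) : Prop :=
  forall x, inI 0 1 x -> continuity_pt (fun y => f (Rmin 1 (Rmax 0 y))) x.
Definition surjective01 (f : R -> R) : Prop :=
  forall y, inI 0 1 y -> exists x, inI 0 1 x /\ f x = y.

Definition image_eq (f : R -> R) (a b c d : R) : Prop :=
  forall y, (exists x, inI a b x /\ f x = y) <-> inI c d y.

Definition proper_subinterval (l r : R) : Prop :=
  0 <= l /\ l <= r /\ r <= 1 /\ ~ (l = 0 /\ r = 1).

Definition tight (f : R -> R) (l r : nat -> R) : Prop :=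
  (forall n, proper_subinterval (l n) (r n)) /\
  (forall n, image_eq f (l (S n)) (r (S n)) (l n) (r n)) /\
  (exists N, forall n, (N <= n)%nat -> l n < r n).

Definition splitting_sequence (f : R -> R) (l r : nat -> R) : Prop :=
  tight f l r /\
  exists (Nset : nat -> Prop) (a b : nat -> R),
    (forall m, exists n, (m <= n)%nat /\ Nset n) /\
    (forall n, Nset n ->
       0 <= a n /\ a n < b n /\ b n <= 1 /\
       (forall x, inI (a n) (b n) x -> inI (l n) (r n) x -> x = l n \/ x = r n) /\
       (forall y, (exists x, inI (a n) (b n) x /\ f x = y) <->
                  (exists x, inI (l n) (r n) x /\ f x = y))).

Definition admits_splitting_sequence (f : R -> R) : Prop :=
  exists l r : nat -> R, splitting_sequence f l r.

Definition two_cycle (f : R -> R) (s t : R) : Prop :=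
  inI 0 1 s /\ inI 0 1 t /\ s <> t /\ f s = t /\ f t = s.

(* Main.v *)
Require Import Defs.
From Stdlib Require Import Reals Lra Ranalysis5 ClassicalEpsilon Classical.
Open Scope R_scope.

Definition g01 (f : R -> R) := fun y => f (Rmin 1 (Rmax 0 y)).

Lemma g01_eq f x : 0 <= x <= 1 -> g01 f x = f x.
Proof.
  intros H; unfold g01; f_equal.
  rewrite Rmax_right by lra. rewrite Rmin_right by lra. reflexivity.
Qed.

Lemma ivt_gen f p q y : continuous01 f -> 0 <= p -> p < q -> q <= 1 ->
  ((f p <= y <= f q) \/ (f q <= y <= f p)) ->
  exists z, p <= z <= q /\ f z = y.
Proof.
  intros Hc H0 Hpq H1 Hy.
  assert (Hcg : forall a, p <= a <= q -> continuity_pt (g01 f) a).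
  { intros a Ha. apply Hc. unfold inI; lra. }
  assert (Ep : g01 f p = f p) by (apply g01_eq; lra).
  assert (Eq : g01 f q = f q) by (apply g01_eq; lra).
  destruct (Req_dec (f p) y) as [E|E]. { exists p; split; [lra|auto]. }
  destruct (Req_dec (f q) y) as [E'|E']. { exists q; split; [lra|auto]. }
  destruct Hy as [Hy|Hy].
  - destruct (IVT_interv (fun x => g01 f x - y) p q) as [z [Hz Hfz]].
    + intros a Ha. apply continuity_pt_minus. now apply Hcg.
      apply continuity_pt_const. intros ? ?; reflexivity.
    + exact Hpq.
    + simpl; lra.
    + simpl; lra.
    + exists z; split; [lra|]. rewrite <- g01_eq by lra. lra.
  - destruct (IVT_interv (fun x => y - g01 f x) p q) as [z [Hz Hfz]].
    + intros a Ha. apply continuity_pt_minus.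
      apply continuity_pt_const. intros ? ?; reflexivity. now apply Hcg.
    + exact Hpq.
    + simpl; lra.
    + simpl; lra.
    + exists z; split; [lra|]. rewrite <- g01_eq by lra. lra.
Qed.

Lemma level_closed f p q c m : continuous01 f -> 0 <= p -> q <= 1 -> p <= m <= q ->
  (forall d, d > 0 -> exists e, p <= e <= q /\ f e = c /\ Rabs (e - m) < d) ->
  f m = c.
Proof.
  intros Hc H0 H1 Hm Hd.
  destruct (Req_dec (f m) c) as [E|E]; auto. exfalso.
  assert (Hcm := Hc m ltac:(unfold inI; lra)). change (continuity_pt (g01 f) m) in Hcm.
  unfold continuity_pt, continue_in, limit1_in, limit_in in Hcm.
  destruct (Hcm (Rabs (f m - c))) as [alp [Halp Hal]].
  { apply Rabs_pos_lt; lra. }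
  destruct (Hd alp Halp) as [e [He [Hfe Hem]]].
  destruct (Req_dec e m) as [Eem|Eem]. { subst; congruence. }
  specialize (Hal e). simpl in Hal. unfold R_dist in Hal.
  rewrite !g01_eq in Hal by lra.
  assert (Hx : Rabs (f e - f m) < Rabs (f m - c)).
  { apply Hal. split; auto. unfold D_x, no_cond; split; auto. }
  rewrite Hfe in Hx. rewrite <- Rabs_Ropp in Hx.
  replace (- (c - f m)) with (f m - c) in Hx by ring. lra.
Qed.

Lemma level_max f p q c : continuous01 f -> 0 <= p -> q <= 1 ->
  (exists x, p <= x <= q /\ f x = c) ->
  exists m, (p <= m <= q /\ f m = c) /\ forall x, p <= x <= q -> f x = c -> x <= m.
Proof.
  intros Hc H0 H1 Hex.
  set (E := fun x => p <= x <= q /\ f x = c).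
  destruct (completeness E) as [m [Hub Hl]].
  { exists q. intros x Hx. unfold E in Hx. lra. }
  { exact Hex. }
  destruct Hex as [x0 Hx0].
  assert (Hm : p <= m <= q).
  { split. apply Rle_trans with x0. lra. apply Hub. exact Hx0.
    apply Hl. intros x Hx. unfold E in Hx; lra. }
  exists m. split; [split; auto|].
  - apply (level_closed f p q c m); auto.
    intros d Hd. apply NNPP; intros Hn.
    assert (m <= m - d); [|lra].
    apply Hl. intros x Hx. destruct (Rle_lt_dec x (m - d)); auto.
    exfalso. apply Hn. exists x. destruct Hx as [Hx1 Hx2]. split; [lra|split; auto].
    assert (x <= m) by (apply Hub; split; auto).
    rewrite Rabs_left1 by lra. lra.
  - intros x Hx Hfx. apply Hub. split; auto.
Qed.

Lemma level_min f p q c : continuous01 f -> 0 <= p -> q <= 1 ->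
  (exists x, p <= x <= q /\ f x = c) ->
  exists m, (p <= m <= q /\ f m = c) /\ forall x, p <= x <= q -> f x = c -> m <= x.
Proof.
  intros Hc H0 H1 Hex.
  set (E := fun x => p <= x <= q /\ f x = c).
  set (L := fun y => forall x, E x -> y <= x).
  destruct Hex as [x0 Hx0].
  destruct (completeness L) as [m [Hub Hl]].
  { exists x0. intros y Hy. apply Hy. exact Hx0. }
  { exists p. intros x Hx. unfold E in Hx; lra. }
  assert (Hlow : forall x, E x -> m <= x).
  { intros x Hx. apply Hl. intros y Hy. apply Hy. exact Hx. }
  assert (Hm : p <= m <= q).
  { split. apply Hub. intros x Hx; unfold E in Hx; lra.
    apply Rle_trans with x0. apply Hlow; exact Hx0. lra. }
  exists m. split; [split; auto|].
  - apply (level_closed f p q c m); auto.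
    intros d Hd. apply NNPP; intros Hn.
    assert (m + d <= m); [|lra].
    apply Hub. intros x Hx. destruct (Rle_lt_dec (m + d) x); auto.
    exfalso. apply Hn. exists x. destruct Hx as [Hx1 Hx2]. split; [lra|split; auto].
    assert (m <= x) by (apply Hlow; split; auto).
    rewrite Rabs_right by lra. lra.
  - intros x Hx Hfx. apply Hlow. split; auto.
Qed.

Lemma image_exact f a b c d : continuous01 f -> 0 <= a -> a < b -> b <= 1 -> c < d ->
  ((f a = c /\ f b = d) \/ (f a = d /\ f b = c)) ->
  (forall x, a < x < b -> f x <> c /\ f x <> d) ->
  image_eq f a b c d.
Proof.
  intros Hc H0 Hab H1 Hcd Hend Hint y. unfold inI. split.
  - intros [x [Hx Hfx]]. subst y. unfold inI in Hx.
    destruct (Req_dec x a) as [->|Na]. { destruct Hend; lra. }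
    destruct (Req_dec x b) as [->|Nb]. { destruct Hend; lra. }
    assert (Hxi : a < x < b) by lra.
    destruct (Hint x Hxi) as [Nc Nd].
    split.
    + destruct (Rle_lt_dec c (f x)) as [|Hlt]; auto. exfalso.
      destruct Hend as [[Ea Eb]|[Ea Eb]].
      * destruct (ivt_gen f x b c Hc ltac:(lra) ltac:(lra) H1 ltac:(lra)) as [z [Hz Hfz]].
        destruct (Req_dec z b); [subst; lra|].
        destruct (Req_dec z x); [subst; lra|].
        destruct (Hint z ltac:(lra)); tauto.
      * destruct (ivt_gen f a x c Hc H0 ltac:(lra) ltac:(lra) ltac:(lra)) as [z [Hz Hfz]].
        destruct (Req_dec z a); [subst; lra|].
        destruct (Req_dec z x); [subst; lra|].
        destruct (Hint z ltac:(lra)); tauto.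
    + destruct (Rle_lt_dec (f x) d) as [|Hlt]; auto. exfalso.
      destruct Hend as [[Ea Eb]|[Ea Eb]].
      * destruct (ivt_gen f a x d Hc H0 ltac:(lra) ltac:(lra) ltac:(lra)) as [z [Hz Hfz]].
        destruct (Req_dec z a); [subst; lra|].
        destruct (Req_dec z x); [subst; lra|].
        destruct (Hint z ltac:(lra)); tauto.
      * destruct (ivt_gen f x b d Hc ltac:(lra) ltac:(lra) H1 ltac:(lra)) as [z [Hz Hfz]].
        destruct (Req_dec z b); [subst; lra|].
        destruct (Req_dec z x); [subst; lra|].
        destruct (Hint z ltac:(lra)); tauto.
  - intros Hy.
    destruct Hend as [[Ea Eb]|[Ea Eb]];
      destruct (ivt_gen f a b y Hc H0 Hab H1 ltac:(lra)) as [z [Hz Hfz]];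
      exists z; unfold inI; auto.
Qed.

Lemma cover f a b c d : continuous01 f -> 0 <= a -> b <= 1 -> c < d ->
  (exists x, a <= x <= b /\ f x = c) -> (exists x, a <= x <= b /\ f x = d) ->
  exists a' b', a <= a' /\ a' < b' /\ b' <= 1 /\ b' <= b /\ image_eq f a' b' c d.
Proof.
  intros Hc H0 H1 Hcd [x1 [Hx1 E1]] [x2 [Hx2 E2]].
  destruct (Rlt_or_le x1 x2) as [Hlt|Hle].
  - destruct (level_max f x1 x2 c Hc ltac:(lra) ltac:(lra)) as [a' [[Ha' Fa'] Ma']].
    { exists x1; split; [lra|auto]. }
    destruct (level_min f a' x2 d Hc ltac:(lra) ltac:(lra)) as [b' [[Hb' Fb'] Mb']].
    { exists x2; split; [lra|auto]. }
    assert (a' <> b') by (intros ->; lra).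
    exists a', b'. split; [lra|split;[lra|split;[lra|split;[lra|]]]].
    apply image_exact; auto; try lra.
    intros x Hx; split; intros Hfx.
    + specialize (Ma' x ltac:(lra) Hfx); lra.
    + specialize (Mb' x ltac:(lra) Hfx); lra.
  - assert (x1 <> x2) by (intros ->; lra).
    destruct (level_min f x2 x1 c Hc ltac:(lra) ltac:(lra)) as [b' [[Hb' Fb'] Mb']].
    { exists x1; split; [lra|auto]. }
    destruct (level_max f x2 b' d Hc ltac:(lra) ltac:(lra)) as [a' [[Ha' Fa'] Ma']].
    { exists x2; split; [lra|auto]. }
    assert (a' <> b') by (intros ->; lra).
    exists a', b'. split; [lra|split;[lra|split;[lra|split;[lra|]]]].
    apply image_exact; auto; try lra.
    intros x Hx; split; intros Hfx.
    + specialize (Mb' x ltac:(lra) Hfx); lra.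
    + specialize (Ma' x ltac:(lra) Hfx); lra.
Qed.

Definition covers (f : R -> R) a b c d :=
  forall y, c <= y <= d -> exists x, a <= x <= b /\ f x = y.

Definition pick (f : R -> R) (a b c d : R) : R * R :=
  epsilon (inhabits (0, 0)) (fun pr => a <= fst pr /\ fst pr < snd pr /\ snd pr <= 1 /\
     snd pr <= b /\ image_eq f (fst pr) (snd pr) c d).

Lemma pick_spec f a b c d : continuous01 f -> 0 <= a -> b <= 1 -> c < d ->
  covers f a b c d ->
  let pr := pick f a b c d in
  a <= fst pr /\ fst pr < snd pr /\ snd pr <= 1 /\ snd pr <= b /\ image_eq f (fst pr) (snd pr) c d.
Proof.
  intros Hc H0 H1 Hcd Hcov. unfold pick. apply epsilon_spec.
  destruct (cover f a b c d Hc H0 H1 Hcd) as [a' [b' H]].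
  - apply Hcov; lra.
  - apply Hcov; lra.
  - exists (a', b'); simpl; exact H.
Qed.

Lemma even_S k : Nat.even (S k) = negb (Nat.even k).
Proof.
  induction k; auto. change (Nat.even (S (S k))) with (Nat.even k).
  rewrite IHk. destruct (Nat.even k); reflexivity.
Qed.

Lemma covers_sub f a b c d c' d' : covers f a b c d -> c <= c' -> d' <= d -> covers f a b c' d'.
Proof. intros H ? ? y Hy. apply H. lra. Qed.

Fixpoint Tseq (f : R -> R) (p1 p2 q1 q2 : R) (n : nat) : R * R :=
  match n with
  | O => (p1, p2)
  | S k => if Nat.even k then pick f q1 q2 (fst (Tseq f p1 p2 q1 q2 k)) (snd (Tseq f p1 p2 q1 q2 k))
           else pick f p1 p2 (fst (Tseq f p1 p2 q1 q2 k)) (snd (Tseq f p1 p2 q1 q2 k))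
  end.

Theorem split_from f p1 p2 q1 q2 m1 m2 :
  continuous01 f ->
  0 <= p1 -> p1 < p2 -> p2 <= 1 -> ~ (p1 = 0 /\ p2 = 1) ->
  0 <= q1 -> q1 < q2 -> q2 <= 1 -> ~ (q1 = 0 /\ q2 = 1) ->
  0 <= m1 -> m2 <= 1 ->
  covers f p1 p2 q1 q2 -> covers f q1 q2 p1 p2 ->
  covers f m1 m2 p1 p2 -> covers f m1 m2 q1 q2 ->
  (p2 <= m1 \/ m2 <= p1) -> (q2 <= m1 \/ m2 <= q1) ->
  admits_splitting_sequence f.
Proof.
  intros Hc Hp0 Hp Hp1 Hpp Hq0 Hq Hq1 Hqq Hm0 Hm1 CPQ CQP CMP CMQ SP SQ.
  set (T := Tseq f p1 p2 q1 q2).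
  assert (Inv : forall n,
    (Nat.even n = true -> p1 <= fst (T n) /\ fst (T n) < snd (T n) /\ snd (T n) <= p2) /\
    (Nat.even n = false -> q1 <= fst (T n) /\ fst (T n) < snd (T n) /\ snd (T n) <= q2)).
  { induction n as [|k [IH1 IH2]].
    - simpl. split; intros; [lra|discriminate].
    - rewrite even_S. unfold T; simpl Tseq; fold T.
      destruct (Nat.even k) eqn:E; simpl.
      + destruct (IH1 eq_refl) as [A [B C]].
        destruct (pick_spec f q1 q2 (fst (T k)) (snd (T k)) Hc Hq0 Hq1 B) as [X [Y [Z [W _]]]].
        { apply (covers_sub f q1 q2 p1 p2); auto. }
        split; intros; [discriminate|lra].
      + destruct (IH2 eq_refl) as [A [B C]].
        destruct (pick_spec f p1 p2 (fst (T k)) (snd (T k)) Hc Hp0 Hp1 B) as [X [Y [Z [W _]]]].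
        { apply (covers_sub f p1 p2 q1 q2); auto. }
        split; intros; [lra|discriminate]. }
  assert (Img : forall k, image_eq f (fst (T (S k))) (snd (T (S k))) (fst (T k)) (snd (T k))).
  { intros k. unfold T; simpl Tseq; fold T.
    destruct (Inv k) as [I1 I2].
    destruct (Nat.even k) eqn:E.
    + destruct (I1 eq_refl) as [A [B C]].
      destruct (pick_spec f q1 q2 (fst (T k)) (snd (T k)) Hc Hq0 Hq1 B) as [X [Y [Z [W V]]]].
      { apply (covers_sub f q1 q2 p1 p2); auto. }
      exact V.
    + destruct (I2 eq_refl) as [A [B C]].
      destruct (pick_spec f p1 p2 (fst (T k)) (snd (T k)) Hc Hp0 Hp1 B) as [X [Y [Z [W V]]]].
      { apply (covers_sub f p1 p2 q1 q2); auto. }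
      exact V. }
  assert (Loc : forall n, (p1 <= fst (T n) /\ fst (T n) < snd (T n) /\ snd (T n) <= p2 /\
                           (p2 <= m1 \/ m2 <= p1)) \/
                          (q1 <= fst (T n) /\ fst (T n) < snd (T n) /\ snd (T n) <= q2 /\
                           (q2 <= m1 \/ m2 <= q1))).
  { intros n. destruct (Inv n) as [I1 I2]. destruct (Nat.even n).
    - left. destruct (I1 eq_refl) as [A [B C]]. auto.
    - right. destruct (I2 eq_refl) as [A [B C]]. auto. }
  assert (CovM : forall n, covers f m1 m2 (fst (T n)) (snd (T n))).
  { intros n. destruct (Loc n) as [[A [B [C _]]]|[A [B [C _]]]].
    - apply (covers_sub f m1 m2 p1 p2); auto.
    - apply (covers_sub f m1 m2 q1 q2); auto. }
  exists (fun n => fst (T n)), (fun n => snd (T n)).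
  split.
  - split; [|split].
    + intros n. unfold proper_subinterval.
      destruct (Loc n) as [[A [B [C _]]]|[A [B [C _]]]].
      * split; [lra|split; [lra|split; [lra|]]]. intros [E1 E2]. apply Hpp. lra.
      * split; [lra|split; [lra|split; [lra|]]]. intros [E1 E2]. apply Hqq. lra.
    + intros n. apply Img.
    + exists 0%nat. intros n _. destruct (Loc n) as [[A [B _]]|[A [B _]]]; exact B.
  - exists (fun n => (1 <= n)%nat),
      (fun n => fst (pick f m1 m2 (fst (T (pred n))) (snd (T (pred n))))),
      (fun n => snd (pick f m1 m2 (fst (T (pred n))) (snd (T (pred n))))).
    split.
    + intros m. exists (S m). split; auto with arith.
    + intros n Hn. destruct n as [|k]; [inversion Hn|]. simpl pred.
      destruct (Loc k) as [[A [B _]]|[A [B _]]];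
      destruct (pick_spec f m1 m2 (fst (T k)) (snd (T k)) Hc Hm0 Hm1 B (CovM k))
        as [X [Y [Z [W V]]]];
      (split; [lra|split; [lra|split; [lra|split]]]).
      * intros x Hx1 Hx2. unfold inI in *.
        destruct (Loc (S k)) as [[A' [B' [C' [D'|D']]]]|[A' [B' [C' [D'|D']]]]];
          [right|left|right|left]; lra.
      * intros y. rewrite (V y). symmetry. apply Img.
      * intros x Hx1 Hx2. unfold inI in *.
        destruct (Loc (S k)) as [[A' [B' [C' [D'|D']]]]|[A' [B' [C' [D'|D']]]]];
          [right|left|right|left]; lra.
      * intros y. rewrite (V y). symmetry. apply Img.
Qed.

Lemma covers_end f a b c d : continuous01 f -> 0 <= a -> a < b -> b <= 1 ->
  ((f a = c /\ f b = d) \/ (f a = d /\ f b = c)) -> covers f a b c d.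
Proof.
  intros Hc H0 Hab H1 He y Hy.
  destruct (ivt_gen f a b y Hc H0 Hab H1) as [z Hz]; [lra|]. exists z; exact Hz.
Qed.

Lemma disjoint_case f s t u v : continuous01 f ->
  two_cycle f s t -> two_cycle f u v -> s < t -> t < u -> u < v ->
  admits_splitting_sequence f.
Proof.
  intros Hc [Hs [Ht [_ [Fs Ft]]]] [Hu [Hv [_ [Fu Fv]]]] H1 H2 H3. unfold inI in *.
  assert (Cst : covers f s t s t) by (apply covers_end; auto; lra).
  assert (Ctu : covers f t u s t).
  { apply (covers_sub f t u s v); [apply covers_end; auto; lra|lra|lra]. }
  apply (split_from f s t s t t u); auto; lra.
Qed.

Lemma interleave_case f s t u v : continuous01 f ->
  two_cycle f s t -> two_cycle f u v -> s < u -> u < t -> t < v ->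
  admits_splitting_sequence f.
Proof.
  intros Hc [Hs [Ht [_ [Fs Ft]]]] [Hu [Hv [_ [Fu Fv]]]] H1 H2 H3. unfold inI in *.
  assert (CPQ : covers f s u t v) by (apply covers_end; auto; lra).
  assert (CQP : covers f t v s u) by (apply covers_end; auto; lra).
  assert (CM : covers f u t s v) by (apply covers_end; auto; lra).
  apply (split_from f s u t v u t); auto; try lra;
    apply (covers_sub f u t s v); auto; lra.
Qed.

Theorem lemma3p13 (f : R -> R) :
  self_map01 f -> continuous01 f -> surjective01 f ->
  ~ admits_splitting_sequence f ->
  forall s t u v : R,
    two_cycle f s t -> two_cycle f u v -> s < t -> u < v ->
    ~ (s = u /\ t = v) ->
    (s < u /\ u < v /\ v < t) \/ (u < s /\ s < t /\ t < v).
Proof.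
  intros _ Hc _ Hns s t u v C1 C2 Hst Huv Hne.
  pose proof C1 as [_ [_ [_ [Fs Ft]]]]. pose proof C2 as [_ [_ [_ [Fu Fv]]]].
  assert (su : s <> u). { intros ->. apply Hne. split; auto. congruence. }
  assert (sv : s <> v). { intros ->. assert (t = u) by congruence. lra. }
  assert (tu : t <> u). { intros ->. assert (s = v) by congruence. lra. }
  assert (tv : t <> v). { intros ->. assert (s = u) by congruence. contradiction. }
  destruct (Rlt_or_le s u) as [Hsu|Hus].
  - destruct (Rlt_or_le t u) as [Htu|Hut].
    + exfalso. apply Hns. apply (disjoint_case f s t u v); auto.
    + destruct (Rlt_or_le t v) as [Htv|Hvt].
      * exfalso. apply Hns. apply (interleave_case f s t u v); auto; lra.
      * left. lra.
  - destruct (Rlt_or_le v s) as [Hvs|Hsv].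
    + exfalso. apply Hns. apply (disjoint_case f u v s t); auto.
    + destruct (Rlt_or_le v t) as [Hvt|Htv].
      * exfalso. apply Hns. apply (interleave_case f u v s t); auto; lra.
      * right. lra.
Qed.
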